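(* Let $\Bbbk$ be a field, $A$ a $\Bbbk$-algebra and $\Gamma$ a subalgebra of $A$, and let $\sim$ be an equivalence relation on $\mathrm{cfs}(\Gamma)$. Suppose $\Gamma$ is a Harish-Chandra block subalgebra of $A$ with respect to $\sim$. Then: (i) $\mathrm{HC}(A;\Gamma,\sim)=\bigoplus_{\mathcal{D}\in(\mathrm{cfs}(\Gamma)/{\sim})/\Delta}\mathrm{HC}(A;\Gamma,\sim;\mathcal{D})$; that is, every $V\in \mathrm{HC}(A;\Gamma,\sim)$ is the direct sum, as $A$-modules, of modules $V_{\mathcal D}\in \mathrm{HC}(A;\Gamma,\sim;\mathcal{D})$ (one for each $\Delta$-class $\mathcal D$), and there are no nonzero $A$-module maps between objects of $\mathrm{HC}(A;\Gamma,\sim;\mathcal{D})$ and $\mathrm{HC}(A;\Gamma,\sim;\mathcal{D}')$ for distinct $\Delta$-classes $\mathcal D\neq\mathcal D'$. (ii) $\mathrm{Irr}(A;\Gamma,\sim)=\bigsqcup_{\mathcal{D}\in(\mathrm{cfs}(\Gamma)/{\sim})/\nabla}\mathrm{Irr}(A;\Gamma,\sim;\mathcal{D})$.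
   Context: All algebras are associative unital $\Bbbk$-algebras. $\mathrm{cfs}(\Gamma)$ denotes the set of maximal two-sided ideals $\mathfrak m$ of $\Gamma$ with $\Gamma/\mathfrak m$ finite-dimensional. For an equivalence class $B\in\mathrm{cfs}(\Gamma)/{\sim}$ let $\mathcal W(B)=\{\mathfrak m_1\cdots\mathfrak m_k: k\ge 0,\ \mathfrak m_1,\dots,\mathfrak m_k\in B\}$ (products of ideals; the empty product is $\Gamma$). For a $\Gamma$-module $V$ the block space is $V(B)=\{v\in V:\mathfrak m v=0\text{ for some }\mathfrak m\in\mathcal W(B)\}$; the sum $\sum_B V(B)$ is always direct. $V$ is a block module if $V=\bigoplus_{B}V(B)$, and $\mathrm{Supp}(V)=\{B: V(B)\neq 0\}$. A Harish-Chandra block module is an $A$-module that is a block module as a $\Gamma$-module; $\mathrm{HC}(A;\Gamma,\sim)$ is the full subcategory of $A$-modules consisting of these. $\Gamma$ is a Harish-Chandra block subalgebra of $A$ (w.r.t. $\sim$) if the left $A$-module $A/A\mathfrak m$ is a Harish-Chandra block module for every $B$ and every $\mathfrak m\in\mathcal W(B)$. Let $\prec$ be the preorder on $\mathrm{cfs}(\Gamma)/{\sim}$ generated by the pairs $B\prec C$ whenever $C\in\mathrm{Supp}(A/A\mathfrak m)$ for some $\mathfrak m\in B$. Let $\Delta$ be the equivalence relation generated by $\prec$ and $\nabla$ the equivalence relation induced by $\prec$ ($B\,\nabla\, C$ iff $B\prec C$ and $C\prec B$). For $\mathcal D\subseteq \mathrm{cfs}(\Gamma)/{\sim}$, $\mathrm{HC}(A;\Gamma,\sim;\mathcal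 D)$ is the full subcategory of Harish-Chandra block modules $V$ with $\mathrm{Supp}(V)\subseteq\mathcal D$, and $\mathrm{Irr}(A;\Gamma,\sim;\mathcal D)$ is the set of isomorphism classes of simple objects of it; $\mathrm{Irr}(A;\Gamma,\sim)$ is the set of isomorphism classes of simple Harish-Chandra block modules. *)

(* Defs.v *)
From HB Require Import structures.
From mathcomp Require Import all_boot all_order all_algebra.
From Stdlib Require Import Relations.
From Stdlib Require List.
Set Implicit Arguments. Unset Strict Implicit. Unset Printing Implicit Defensive.
Import GRing.Theory.
Local Open Scope ring_scope.

(*  commutative).  The subalgebra Gamma is a predicate G on A with     *)
(*  subalg_closed G.  Subsets of A / of modules are predicates (-> Prop)*)
(*  A left A-module is an lmodType k  V  with an action  act.          *)

Definition iset (T : Type) := T -> Prop.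

Definition is_Amodule (k : fieldType) (A : algType k) (V : lmodType k)
  (act : A -> V -> V) : Prop :=
  [/\ (forall a (c : k) (u v : V), act a (c *: u + v) = c *: act a u + act a v),
      (forall (c : k) (a b : A) (v : V), act (c *: a + b) v = c *: act a v + act b v),
      (forall v, act 1 v = v)
    & (forall a b v, act (a * b) v = act a (act b v))].

Definition is_submodule (k : fieldType) (A : algType k) (V : lmodType k)
  (act : A -> V -> V) (W : iset V) : Prop :=
  [/\ W 0, (forall (c : k) u v, W u -> W v -> W (c *: u + v))
    & (forall a v, W v -> W (act a v))].

Definition is_Ahom (k : fieldType) (A : algType k) (V V' : lmodType k)
  (act : A -> V -> V) (act' : A -> V' -> V') (f : V -> V') : Prop :=
  (forall (c : k) u v, f (c *: u + v) = c *: f u + f v) /\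
  (forall a v, f (act a v) = act' a (f v)).

Definition is_idealG (k : fieldType) (A : algType k) (G : {pred A}) (m : iset A) : Prop :=
  [/\ (forall x, m x -> G x), m 0, (forall x y, m x -> m y -> m (x - y))
    & (forall g x, G g -> m x -> m (g * x) /\ m (x * g))].

Definition is_maximal_idealG (k : fieldType) (A : algType k) (G : {pred A}) (m : iset A) : Prop :=
  [/\ is_idealG G m, (exists g, G g /\ ~ m g)
    & (forall J : iset A, is_idealG G J -> (forall x, m x -> J x) ->
          (forall x, J x -> m x) \/ (forall x, G x -> J x))].

(* Gamma / m is finite-dimensional over k *)
Definition finite_codim (k : fieldType) (A : algType k) (G : {pred A}) (m : iset A) : Prop :=
  exists (n : nat) (e : 'I_n -> A), (forall i, G (e i)) /\
    forall g, G g -> exists c : 'I_n -> k, m (g - \sum_(i < n) c i *: e i).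

Definition cfs (k : fieldType) (A : algType k) (G : {pred A}) (m : iset A) : Prop :=
  is_maximal_idealG G m /\ finite_codim G m.

Definition equiv_on_cfs (k : fieldType) (A : algType k) (G : {pred A})
  (sim : iset A -> iset A -> Prop) : Prop :=
  [/\ (forall m, cfs G m -> sim m m),
      (forall m n, cfs G m -> cfs G n -> sim m n -> sim n m)
    & (forall m n p, cfs G m -> cfs G n -> cfs G p -> sim m n -> sim n p -> sim m p)].

Definition is_class (k : fieldType) (A : algType k) (G : {pred A})
  (sim : iset A -> iset A -> Prop) (B : iset (iset A)) : Prop :=
  exists m0, cfs G m0 /\ forall m, B m <-> (cfs G m /\ sim m m0).

Definition ideal_mul (k : fieldType) (A : algType k) (I J : iset A) : iset A :=
  fun z => exists s : seq (A * A),
    (forall p, p \in s -> I p.1 /\ J p.2) /\ z = \sum_(p <- s) p.1 * p.2.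

(* product m_1 ... m_k of a list of ideals; the empty product is Gamma *)
Definition ideal_prod (k : fieldType) (A : algType k) (G : {pred A})
  (l : list (iset A)) : iset A :=
  List.fold_right (@ideal_mul k A) (fun x => G x) l.

Definition left_ideal_gen (k : fieldType) (A : algType k) (m : iset A) : iset A :=
  ideal_mul (fun _ => True) m.

(* Block notions for the subquotient S / Z of an A-module V, where Z is
   the "zero" submodule: for a module V itself use Z = {0} and S = V;
   for a submodule W of V use S = W, Z = {0}; for a quotient V/U use
   S = V, Z = U.  An element v is in the block space (S/Z)(B) iff some
   m in W(B) satisfies m v = 0 in the quotient. *)
Definition in_block (k : fieldType) (A : algType k) (G : {pred A}) (V : lmodType k)
  (act : A -> V -> V) (Z : iset V) (B : iset (iset A)) (v : V) : Prop :=
  exists l : list (iset A), (forall m, List.In m l -> B m) /\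
    forall x, ideal_prod G l x -> Z (act x v).

(* S/Z is a block module: S/Z = sum_B (S/Z)(B) (the sum is always direct) *)
Definition is_block (k : fieldType) (A : algType k) (G : {pred A})
  (sim : iset A -> iset A -> Prop) (V : lmodType k) (act : A -> V -> V)
  (S Z : iset V) : Prop :=
  forall v, S v -> exists s : seq V,
    (forall w, w \in s -> S w /\ exists B, is_class G sim B /\ in_block G act Z B w) /\
    Z (v - \sum_(w <- s) w).

Definition in_supp (k : fieldType) (A : algType k) (G : {pred A}) (V : lmodType k)
  (act : A -> V -> V) (S Z : iset V) (B : iset (iset A)) : Prop :=
  exists v, [/\ S v, ~ Z v & in_block G act Z B v].

Definition zero_set (k : fieldType) (V : lmodType k) : iset V := fun v => v = 0.
Definition full_set (T : Type) : iset T := fun _ => True.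

Definition HC_sub_D (k : fieldType) (A : algType k) (G : {pred A})
  (sim : iset A -> iset A -> Prop) (V : lmodType k) (act : A -> V -> V)
  (D : iset (iset (iset A))) (W : iset V) : Prop :=
  is_block G sim act W (@zero_set k V) /\
  forall B, is_class G sim B -> in_supp G act W (@zero_set k V) B -> D B.

Definition HC_sub (k : fieldType) (A : algType k) (G : {pred A})
  (sim : iset A -> iset A -> Prop) (V : lmodType k) (act : A -> V -> V)
  (W : iset V) : Prop :=
  is_block G sim act W (@zero_set k V).

Definition HC (k : fieldType) (A : algType k) (G : {pred A})
  (sim : iset A -> iset A -> Prop) (V : lmodType k) (act : A -> V -> V) : Prop :=
  HC_sub G sim act (@full_set V).

Definition HC_D (k : fieldType) (A : algType k) (G : {pred A})
  (sim : iset A -> iset A -> Prop) (V : lmodType k) (act : A -> V -> V)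
  (D : iset (iset (iset A))) : Prop :=
  HC_sub_D G sim act D (@full_set V).

(* simple object of the full subcategory of A-modules given by P
   (subobjects = submodules lying in the subcategory) *)
Definition simple_in (k : fieldType) (A : algType k) (V : lmodType k)
  (act : A -> V -> V) (P : iset V -> Prop) : Prop :=
  [/\ P (@full_set V), (exists v : V, v <> 0)
    & forall W, is_submodule act W -> P W ->
        (forall v, W v -> v = 0) \/ (forall v, W v)].

(* Gamma is a Harish-Chandra block subalgebra: A / A m is a HC block module
   for all classes B and all m in W(B) *)
Definition HC_block_subalgebra (k : fieldType) (A : algType k) (G : {pred A})
  (sim : iset A -> iset A -> Prop) : Prop :=
  forall B, is_class G sim B -> forall l : list (iset A), (forall m, List.In m l -> B m) ->
    is_block G sim (fun a x : A => a * x) (@full_set A)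
      (left_ideal_gen (ideal_prod G l)).

Definition prec1 (k : fieldType) (A : algType k) (G : {pred A})
  (sim : iset A -> iset A -> Prop) (B C : iset (iset A)) : Prop :=
  [/\ is_class G sim B, is_class G sim C &
    exists m, B m /\ in_supp G (fun a x : A => a * x) (@full_set A) (left_ideal_gen m) C].

Definition prec (k : fieldType) (A : algType k) (G : {pred A})
  (sim : iset A -> iset A -> Prop) : relation (iset (iset A)) :=
  clos_refl_trans _ (prec1 G sim).

Definition Delta (k : fieldType) (A : algType k) (G : {pred A})
  (sim : iset A -> iset A -> Prop) : relation (iset (iset A)) :=
  clos_refl_sym_trans _ (prec G sim).

Definition Nabla (k : fieldType) (A : algType k) (G : {pred A})
  (sim : iset A -> iset A -> Prop) (B C : iset (iset A)) : Prop :=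
  prec G sim B C /\ prec G sim C B.

Definition is_R_class (k : fieldType) (A : algType k) (G : {pred A})
  (sim : iset A -> iset A -> Prop) (R : relation (iset (iset A)))
  (D : iset (iset (iset A))) : Prop :=
  exists B0, is_class G sim B0 /\ forall B, D B <-> (is_class G sim B /\ R B B0).

(* Main.v *)
Require Import Defs.
From HB Require Import structures.
From mathcomp Require Import all_boot all_order all_algebra.
From Stdlib Require Import Relations Classical FunctionalExtensionality PropExtensionality.
Import GRing.Theory.
Local Open Scope ring_scope.
Set Implicit Arguments. Unset Strict Implicit. Unset Printing Implicit Defensive.

Section Main.
Variables (k : fieldType) (A : algType k) (G : {pred A}).
Hypothesis HG : GRing.subalg_closed G.

Lemma G1 : G 1. Proof. by case: HG. Qed.
Lemma Glin c u v : G u -> G v -> G (c *: u + v).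
Proof. by case: HG => _ H _; apply: H. Qed.
Lemma GM u v : G u -> G v -> G (u * v).
Proof. by case: HG => _ _ H; apply: H. Qed.
Lemma GD u v : G u -> G v -> G (u + v).
Proof. by move=> hu hv; have := Glin 1 hu hv; rewrite scale1r. Qed.
Lemma G0 : G 0.
Proof. by have := Glin (-1) G1 G1; rewrite scaleN1r addNr. Qed.
Lemma GB u v : G u -> G v -> G (u - v).
Proof. by move=> hu hv; have := Glin (-1) hv hu; rewrite scaleN1r addrC. Qed.

Lemma id_add (m : iset A) : is_idealG G m -> forall x y, m x -> m y -> m (x + y).
Proof.
case=> _ h0 hs _ x y hx hy.
have hy' : m (0 - y) by apply: hs.
by have := hs _ _ hx hy'; rewrite sub0r opprK.
Qed.

Lemma id_G (m : iset A) : is_idealG G m -> forall x, m x -> G x.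
Proof. by case. Qed.
Lemma id_0 (m : iset A) : is_idealG G m -> m 0.
Proof. by case. Qed.
Lemma id_l (m : iset A) : is_idealG G m -> forall g x, G g -> m x -> m (g * x).
Proof. by case=> _ _ _ h g x hg hx; case: (h g x hg hx). Qed.
Lemma id_r (m : iset A) : is_idealG G m -> forall g x, G g -> m x -> m (x * g).
Proof. by case=> _ _ _ h g x hg hx; case: (h g x hg hx). Qed.

Lemma G_ideal : is_idealG G (fun x => G x).
Proof.
split=> //; first exact: G0; first by move=> x y; apply: GB.
by move=> g x hg hx; split; apply: GM.
Qed.

Lemma ideal_mul_ideal (I J : iset A) : is_idealG G I -> is_idealG G J ->
  is_idealG G (ideal_mul I J).
Proof.
move=> hI hJ; split.
- move=> x [s [hs ->]]; elim: s hs => [|p s IH] hs; first by rewrite big_nil G0.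
  rewrite big_cons; apply: GD.
    have [h1 h2] := hs p (mem_head _ _); apply: GM; [exact: id_G h1 | exact: id_G h2].
  by apply: IH => q hq; apply: hs; rewrite in_cons hq orbT.
- by exists [::]; rewrite big_nil.
- move=> x y [s [hs ->]] [t [ht ->]].
  exists (s ++ map (fun p => (- p.1, p.2)) t); split.
    move=> p; rewrite mem_cat => /orP [/hs //|/mapP [q hq ->]] /=.
    have [h1 h2] := ht q hq; split=> //.
    by have := (match hI with And4 _ _ h _ => h end) 0 q.1 (id_0 hI) h1; rewrite sub0r.
  by rewrite big_cat big_map /= -sumrN; congr (_ + _); apply: eq_bigr => p _; rewrite mulNr.
- move=> g x hg [s [hs ->]]; split.
    exists (map (fun p => (g * p.1, p.2)) s); split.
      by move=> p /mapP [q hq ->] /=; have [h1 h2] := hs q hq; split=> //; apply: id_l.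
    by rewrite big_map mulr_sumr; apply: eq_bigr => p _; rewrite mulrA.
  exists (map (fun p => (p.1, p.2 * g)) s); split.
    by move=> p /mapP [q hq ->] /=; have [h1 h2] := hs q hq; split=> //; apply: id_r.
  by rewrite big_map mulr_suml; apply: eq_bigr => p _; rewrite mulrA.
Qed.

Lemma prod_ideal (l : list (iset A)) : (forall m, List.In m l -> is_idealG G m) ->
  is_idealG G (ideal_prod G l).
Proof.
elim: l => [|m l IH] hl /=; first exact: G_ideal.
apply: ideal_mul_ideal; first by apply: hl; left.
by apply: IH => x hx; apply: hl; right.
Qed.


Lemma In_mem (T : eqType) (x : T) s : List.In x s -> x \in s.
Proof. elim: s => [|y s IH] //= [->|h]; rewrite in_cons; [by rewrite eqxx | by rewrite IH ?orbT]. Qed.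

Lemma mul_mono2 (I J J' : iset A) x : (forall y, J y -> J' y) ->
  ideal_mul I J x -> ideal_mul I J' x.
Proof.
move=> h [s [hs ->]]; exists s; split=> // p hp.
by have [? ?] := hs p hp; split=> //; apply: h.
Qed.

Lemma prod_pref l1 l2 x : (forall m, List.In m l2 -> is_idealG G m) ->
  ideal_prod G (l1 ++ l2) x -> ideal_prod G l1 x.
Proof.
move=> h; elim: l1 x => [|m l1 IH] x /=; first by move=> hx; apply: (id_G (prod_ideal h) hx).
by apply: mul_mono2 => y; apply: IH.
Qed.

Definition maxid (m : iset A) := is_maximal_idealG G m.
Lemma maxI m : maxid m -> is_idealG G m. Proof. by case. Qed.

Lemma comax2 m m' : maxid m -> maxid m' -> m <> m' ->
  exists a b, [/\ m a, m' b & a + b = 1].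
Proof.
move=> hm hm' hne.
pose J := fun z => exists a b, [/\ m a, m' b & z = a + b].
have I1 := maxI hm; have I2 := maxI hm'.
have HJ : is_idealG G J.
  split.
  - by move=> z [a [b [ha hb ->]]]; apply: GD; [apply: id_G ha | apply: id_G hb].
  - by exists 0, 0; split; rewrite ?addr0 //; apply: id_0.
  - move=> x y [a [b [ha hb ->]]] [a' [b' [ha' hb' ->]]].
    exists (a - a'), (b - b'); split.
    + by case: I1 => _ _ h _; apply: h.
    + by case: I2 => _ _ h _; apply: h.
    + by rewrite opprD addrACA.
  - move=> g x hg [a [b [ha hb ->]]]; split.
      by exists (g * a), (g * b); split; rewrite ?mulrDr //; apply: id_l.
    by exists (a * g), (b * g); split; rewrite ?mulrDl //; apply: id_r.
case: hm => _ [g0 [hg0 hng0]] h; case: (h J HJ).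
- by move=> x hx; exists x, 0; split; rewrite ?addr0 //; apply: id_0.
- move=> hJm; exfalso; apply: hne.
  have sub1 : forall x, m' x -> m x.
    by move=> x hx; apply: hJm; exists 0, x; split; rewrite ?add0r //; apply: id_0.
  case: hm' => _ _ h'; case: (h' m I1 sub1) => [sub2|hG].
    apply: functional_extensionality => x; apply: propositional_extensionality.
    by split; [apply: sub2 | apply: sub1].
  by exfalso; apply: hng0; apply: hG.
- by move=> hG; have [a [b [ha hb e]]] := hG 1 G1; exists a, b.
Qed.

Lemma comax_one m L : maxid m ->
  (forall m', List.In m' L -> maxid m' /\ m <> m') ->
  exists a b, [/\ m a, ideal_prod G L b & a + b = 1].
Proof.
move=> hm; elim: L => [|m' L IH] hL /=.
  by exists 0, 1; split; rewrite ?add0r //; [apply: id_0 (maxI hm) | apply: G1].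
have [hm' ne] := hL m' (or_introl erefl).
have [a1 [b1 [ha1 hb1 e1]]] := comax2 hm hm' ne.
have [a2 [b2 [ha2 hb2 e2]]] := IH (fun x hx => hL x (or_intror hx)).
exists (a1 + b1 * a2), (b1 * b2); split.
- apply: id_add (maxI hm) _ _ ha1 _; apply: id_l (maxI hm) _ _ _ ha2.
  exact: id_G (maxI hm') _ hb1.
- by exists [:: (b1, b2)]; split; [move=> p; rewrite inE => /eqP -> | rewrite big_seq1].
- by rewrite -addrA -mulrDr e2 mulr1.
Qed.

Lemma comax L1 L2 : (forall m, List.In m L1 -> maxid m) ->
  (forall m, List.In m L2 -> maxid m) ->
  (forall m m', List.In m L1 -> List.In m' L2 -> m <> m') ->
  exists x y, [/\ ideal_prod G L1 x, ideal_prod G L2 y & x + y = 1].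
Proof.
move=> h1 h2 hne; elim: L1 h1 hne => [|m L1 IH] h1 hne /=.
  exists 1, 0; split; rewrite ?addr0 //; first exact: G1.
  by apply: id_0; apply: prod_ideal => m hm; apply: maxI; apply: h2.
have hm := h1 m (or_introl erefl).
have [u [w [hu hw e1]]] := comax_one hm (fun m' hm' => conj (h2 m' hm') (hne m m' (or_introl erefl) hm')).
have [x [y [hx hy e2]]] := IH (fun z hz => h1 z (or_intror hz))
   (fun a b ha hb => hne a b (or_intror ha) hb).
have IL2 : is_idealG G (ideal_prod G L2).
  by apply: prod_ideal => z hz; apply: maxI; apply: h2.
exists (u * x), (u * y + w); split.
- by exists [:: (u, x)]; split; [move=> p; rewrite inE => /eqP -> | rewrite big_seq1].
- exact: (id_add IL2 (id_l IL2 (id_G (maxI hm) hu) hy) hw).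
- by rewrite addrA -mulrDr e2 mulr1.
Qed.

Section Mod.
Variables (V : lmodType k) (act : A -> V -> V).
Hypothesis Hact : is_Amodule act.
Let HA : [/\ (forall a (c : k) (u v : V), act a (c *: u + v) = c *: act a u + act a v),
      (forall (c : k) (a b : A) (v : V), act (c *: a + b) v = c *: act a v + act b v),
      (forall v, act 1 v = v)
    & (forall a b v, act (a * b) v = act a (act b v))] := Hact.

Lemma actD a u v : act a (u + v) = act a u + act a v.
Proof. by have [h _ _ _] := HA; rewrite -{1}(scale1r u) h scale1r. Qed.
Lemma act0r a : act a 0 = 0.
Proof. by have h := actD a 0 0; rewrite addr0 in h; apply: (addrI (act a 0)); rewrite addr0 -h. Qed.
Lemma actZ a c u : act a (c *: u) = c *: act a u.
Proof. by have [h _ _ _] := HA; rewrite -(addr0 (c *: u)) h act0r addr0. Qed.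
Lemma actN a u : act a (- u) = - act a u.
Proof. by rewrite -scaleN1r actZ scaleN1r. Qed.
Lemma actB a u v : act a (u - v) = act a u - act a v.
Proof. by rewrite actD actN. Qed.
Lemma actDl a b v : act (a + b) v = act a v + act b v.
Proof. by have [_ h _ _] := HA; rewrite -{1}(scale1r a) h scale1r. Qed.
Lemma act0l v : act 0 v = 0.
Proof. by have h := actDl 0 0 v; rewrite addr0 in h; apply: (addrI (act 0 v)); rewrite addr0 -h. Qed.
Lemma actNl a v : act (- a) v = - act a v.
Proof. by apply/eqP; rewrite -subr_eq0 opprK -actDl addNr act0l. Qed.
Lemma actBl a b v : act (a - b) v = act a v - act b v.
Proof. by rewrite actDl actNl. Qed.
Lemma act1 v : act 1 v = v. Proof. by case: HA. Qed.
Lemma actM a b v : act (a * b) v = act a (act b v). Proof. by case: HA. Qed.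
Lemma act_suml (I : Type) (s : seq I) (F : I -> A) v :
  act (\sum_(i <- s) F i) v = \sum_(i <- s) act (F i) v.
Proof. by elim: s => [|x s IH]; rewrite ?big_nil ?act0l // !big_cons actDl IH. Qed.
Lemma act_sumr (I : Type) (s : seq I) (F : I -> V) a :
  act a (\sum_(i <- s) F i) = \sum_(i <- s) act a (F i).
Proof. by elim: s => [|x s IH]; rewrite ?big_nil ?act0r // !big_cons actD IH. Qed.

Variable Z : iset V.
Hypothesis HZ : is_submodule act Z.
Let HZ' : [/\ Z 0, (forall (c : k) u v, Z u -> Z v -> Z (c *: u + v))
    & (forall a v, Z v -> Z (act a v))] := HZ.
Lemma Z0 : Z 0. Proof. by case: HZ'. Qed.
Lemma ZD u v : Z u -> Z v -> Z (u + v).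
Proof. by have [_ h _ hu hv] := HZ'; have := h 1 _ _ hu hv; rewrite scale1r. Qed.
Lemma ZZ c u : Z u -> Z (c *: u).
Proof. by have [h0 h _ hu] := HZ'; have := h c _ _ hu h0; rewrite addr0. Qed.
Lemma ZN u : Z u -> Z (- u).
Proof. by move=> hu; rewrite -scaleN1r; apply: ZZ. Qed.
Lemma ZB u v : Z u -> Z v -> Z (u - v).
Proof. by move=> hu hv; apply: ZD => //; apply: ZN. Qed.
Lemma Zact a u : Z u -> Z (act a u). Proof. by have [_ _ h] := HZ'; apply: h. Qed.
Lemma Zsum (I : Type) (s : seq I) (F : I -> V) :
  (forall i, List.In i s -> Z (F i)) -> Z (\sum_(i <- s) F i).
Proof.
elim: s => [|x s IH] h; first by rewrite big_nil; exact: Z0.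
by rewrite big_cons; apply: ZD; [apply: h; left | apply: IH => i hi; apply: h; right].
Qed.

Lemma kill_suff l1 l2 v : (forall x, ideal_prod G l2 x -> Z (act x v)) ->
  forall x, ideal_prod G (l1 ++ l2) x -> Z (act x v).
Proof.
move=> h; elim: l1 => [|m l1 IH] x /=; first exact: h.
case=> s [hs ->].
rewrite act_suml; apply: Zsum => p hp; rewrite actM; apply: Zact; apply: IH.
by have [] := hs p (In_mem hp).
Qed.
End Mod.

Variable sim : iset A -> iset A -> Prop.
Hypothesis Hsim : equiv_on_cfs G sim.

Notation cls := (is_class G sim).

Lemma class_cfs B m : cls B -> B m -> cfs G m.
Proof. by move=> [b0 [hb0 hB]] /hB []. Qed.
Lemma class_max B m : cls B -> B m -> maxid m.
Proof. by move=> hB hm; case: (class_cfs hB hm). Qed.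
Lemma class_id B m : cls B -> B m -> is_idealG G m.
Proof. by move=> hB hm; apply: maxI; apply: class_max hB hm. Qed.

Lemma class_eq B C m : cls B -> cls C -> B m -> C m -> B = C.
Proof.
have [Hr Hs Ht] := Hsim.
move=> [b0 [hb0 hB]] [c0 [hc0 hC]] hBm hCm.
have [cm smb] := proj1 (hB m) hBm; have [_ smc] := proj1 (hC m) hCm.
apply: functional_extensionality => x; apply: propositional_extensionality.
rewrite hB hC; split=> -[cx sx]; split=> //.
- apply: (Ht x m c0) => //; apply: (Ht x b0 m) => //; exact: Hs.
- apply: (Ht x m b0) => //; apply: (Ht x c0 m) => //; exact: Hs.
Qed.

Section Mod2.
Variables (V : lmodType k) (act : A -> V -> V).
Hypothesis Hact : is_Amodule act.
Variable Z : iset V.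
Hypothesis HZ : is_submodule act Z.

Definition good (R : iset (iset A) -> Prop) (w : V) :=
  Z w \/ exists C, [/\ cls C, R C & in_block G act Z C w].

Lemma kill_good R (s : seq V) : (forall w, List.In w s -> good R w) ->
  exists L, (forall m, List.In m L -> exists C, [/\ cls C, R C & C m]) /\
    forall x, ideal_prod G L x -> Z (act x (\sum_(w <- s) w)).
Proof.
elim: s => [|w s IH] hs.
  by exists [::]; split=> // x _; rewrite big_nil act0r //; apply: Z0 HZ.
have [L2 [hL2 kL2]] := IH (fun u hu => hs u (or_intror hu)).
have [L1 [hL1 kL1]] : exists L1, (forall m, List.In m L1 -> exists C, [/\ cls C, R C & C m]) /\
    forall x, ideal_prod G L1 x -> Z (act x w).
  case: (hs w (or_introl erefl)) => [hw|[C [hC hR [l [hl kl]]]]].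
    by exists [::]; split=> // x _; apply: (Zact HZ).
  by exists l; split=> // m hm; exists C; split=> //; apply: hl.
exists (L1 ++ L2); split.
  move=> m hm; case: (List.in_app_or _ _ _ hm); [exact: hL1 | exact: hL2].
move=> x hx; rewrite big_cons actD //; apply: (ZD HZ).
  apply: kL1; apply: prod_pref hx => m hm.
  by have [C [hC _ hCm]] := hL2 m hm; apply: class_id hC hCm.
exact: (kill_suff Hact HZ kL2 hx).
Qed.

Lemma DIR R1 R2 v (s t : seq V) : (forall C, cls C -> R1 C -> R2 C -> False) ->
  (forall w, List.In w s -> good R1 w) -> (forall w, List.In w t -> good R2 w) ->
  Z (v - \sum_(w <- s) w) -> Z (v - \sum_(w <- t) w) -> Z v.
Proof.
move=> hdis hs ht zs zt.
have [L1 [hL1 kL1]] := kill_good hs; have [L2 [hL2 kL2]] := kill_good ht.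
have [x [y [hx hy e]]] : exists x y, [/\ ideal_prod G L1 x, ideal_prod G L2 y & x + y = 1].
  apply: comax.
  - by move=> m /hL1 [C [hC _ hm]]; apply: class_max hC hm.
  - by move=> m /hL2 [C [hC _ hm]]; apply: class_max hC hm.
  move=> m m' /hL1 [C [hC hR1 hm]] /hL2 [C' [hC' hR2 hm']] eqm.
  rewrite -eqm in hm'; have eC := class_eq hC hC' hm hm'.
  by rewrite -eC in hR2; apply: hdis hC hR1 hR2.
rewrite -(act1 Hact v) -e actDl //; apply: (ZD HZ).
  rewrite -(subrK (\sum_(w <- s) w) v) actD //; apply: (ZD HZ); last exact: kL1.
  exact: (Zact HZ).
rewrite -(subrK (\sum_(w <- t) w) v) actD //; apply: (ZD HZ); last exact: kL2.
exact: (Zact HZ).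
Qed.
End Mod2.


Definition mulA := fun a x : A => a * x.
Definition LG := @left_ideal_gen k A.

Lemma mulA_mod : @is_Amodule k A A mulA.
Proof.
split; rewrite /mulA.
- by move=> a c u v; rewrite mulrDr scalerAr.
- by move=> c a b v; rewrite mulrDl scalerAl.
- by move=> v; rewrite mul1r.
- by move=> a b v; rewrite mulrA.
Qed.

Lemma LG_sum (J : iset A) (s : seq (A * A)) :
  (forall p, p \in s -> J p.2) -> LG J (\sum_(p <- s) p.1 * p.2).
Proof. by move=> h; exists s; split=> // p /h. Qed.

Lemma LG0 J : LG J 0. Proof. by exists [::]; rewrite big_nil. Qed.
Lemma LG_add J x y : LG J x -> LG J y -> LG J (x + y).
Proof.
move=> [s [hs ->]] [t [ht ->]]; exists (s ++ t); split; last by rewrite big_cat.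
by move=> p; rewrite mem_cat => /orP [/hs|/ht].
Qed.
Lemma LG_lmul J a x : LG J x -> LG J (a * x).
Proof.
move=> [s [hs ->]]; exists (map (fun p => (a * p.1, p.2)) s); split.
  by move=> p /mapP [q /hs hq ->].
by rewrite big_map mulr_sumr; apply: eq_bigr => p _; rewrite mulrA.
Qed.
Lemma LG_closed J (s : seq (A * A)) :
  (forall p, List.In p s -> LG J p.2) -> LG J (\sum_(p <- s) p.1 * p.2).
Proof.
elim: s => [|p s IH] h; first by rewrite big_nil; apply: LG0.
rewrite big_cons; apply: LG_add; first by apply: LG_lmul; apply: h; left.
by apply: IH => q hq; apply: h; right.
Qed.
Lemma LG_of I J x : ideal_mul I J x -> LG J x.
Proof. by move=> [s [hs ->]]; exists s; split=> // p /hs []. Qed.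
Lemma LG_mono (J J' : iset A) x : (forall y, J y -> J' y) -> LG J x -> LG J' x.
Proof. exact: mul_mono2. Qed.

Lemma LG_sub J : is_submodule mulA (LG J).
Proof.
split; first exact: LG0.
- move=> c u v hu hv; apply: LG_add => //.
  by rewrite -(mul1r u) scalerAl; apply: LG_lmul.
- by move=> a v hv; apply: LG_lmul.
Qed.

Lemma ideal_mul_subl (I J : iset A) x : is_idealG G I -> (forall y, J y -> G y) ->
  ideal_mul I J x -> I x.
Proof.
move=> hI hJ [s [hs ->]]; elim: s hs => [|p s IH] hs; first by rewrite big_nil; apply: id_0.
rewrite big_cons; apply: (id_add hI).
  by have [h1 h2] := hs p (mem_head _ _); apply: (id_r hI (hJ _ h2) h1).
by apply: IH => q hq; apply: hs; rewrite in_cons hq orbT.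
Qed.

Lemma LG_G a : LG (fun x => G x) a.
Proof.
by exists [:: (a, 1)]; split; [move=> p; rewrite inE => /eqP -> /=; split=> //; apply: G1 | rewrite big_seq1 mulr1].
Qed.

Hypothesis HCb : HC_block_subalgebra G sim.

Notation Zl l := (LG (ideal_prod G l)).

Lemma L_lemma l B : cls B -> (forall m, List.In m l -> B m) ->
  forall C a, cls C -> in_block G mulA (Zl l) C a -> ~ Zl l a -> prec G sim B C.
Proof.
move=> hB; elim: l => [|m l' IH] hl C a hC hblk hna.
  by exfalso; apply: hna; apply: LG_G.
set P := ideal_prod G l'.
have IP : is_idealG G P by apply: prod_ideal => x hx; apply: class_id hB (hl x (or_intror hx)).
have hBm : B m := hl m (or_introl erefl).
have Im : is_idealG G m := class_id hB hBm.
have sub1 : forall z, Zl (m :: l') z -> Zl l' z.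
  move=> z /= [s [hs ->]]; apply: LG_closed => p /In_mem /hs [_ h2].
  exact: LG_of h2.
case: (classic (Zl l' a)) => ha; last first.
  apply: (IH (fun x hx => hl x (or_intror hx)) C a hC) => //.
  by case: hblk => lb [hlb kb]; exists lb; split=> // x /kb; apply: sub1.
pose Z := Zl (m :: l').
have HZ : is_submodule mulA Z := LG_sub _.
pose mG := ideal_prod G [:: m].
have mGm : forall x, mG x -> m x.
  by move=> x hx; exact: (ideal_mul_subl Im (fun y (hy : G y) => hy) hx).
have mmG : forall x, m x -> mG x.
  move=> x hx; exists [:: (x, 1)]; split; last by rewrite big_seq1 mulr1.
  by move=> p; rewrite inE => /eqP -> /=; split=> //; apply: G1.
have MULY : forall z y, LG mG z -> P y -> Z (z * y).
  move=> z y [s [hs ->]] hy; rewrite mulr_suml.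
  have -> : \sum_(i <- s) i.1 * i.2 * y = \sum_(q <- map (fun p => (p.1, p.2 * y)) s) q.1 * q.2.
    by rewrite big_map; apply: eq_bigr => p _; rewrite mulrA.
  apply: LG_sum => q /mapP [p hp ->] /=.
  exists [:: (p.2, y)]; split; last by rewrite big_seq1.
  move=> r; rewrite inE => /eqP -> /=; split=> //.
  by apply: mGm; have [] := hs p hp.
pose Q := fun w => exists C', [/\ cls C', in_block G mulA Z C' w & (~ Z w -> prec G sim B C')].
pose GoodA := fun x => exists ws, (forall w, List.In w ws -> Q w) /\ Z (x - \sum_(w <- ws) w).
have GA0 : GoodA 0 by exists [::]; split=> //; rewrite big_nil subr0; apply: LG0.
have GAD : forall x y, GoodA x -> GoodA y -> GoodA (x + y).
  move=> x y [w1 [h1 z1]] [w2 [h2 z2]]; exists (w1 ++ w2); split.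
    by move=> w hw; case: (List.in_app_or _ _ _ hw); [apply: h1 | apply: h2].
  by rewrite big_cat opprD addrACA; apply: LG_add.
have GAby : forall b y, P y -> GoodA (b * y).
  move=> b y hy.
  have hblkm := HCb hB (l := [:: m]) (fun x hx => match hx with or_introl e => eq_ind m B hBm x e | or_intror f => match f with end end).
  have [t [ht zt]] := hblkm b I.
  exists (map (fun w => w * y) t); split.
    move=> w' /List.in_map_iff [w [<- hw]].
    have [_ [C' [hC' [lw [hlw kw]]]]] := ht w (In_mem hw).
    exists C'; split=> //.
      by exists lw; split=> // x hx; rewrite /mulA mulrA; apply: MULY => //; apply: kw.
    move=> hnz; apply: rt_step; split=> //; exists m; split=> //.
    exists w; split=> //.
      by move=> hw'; apply: hnz; apply: MULY => //; apply: LG_mono hw'.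
    by exists lw; split=> // x /kw hx; apply: LG_mono hx.
  by rewrite big_map -mulr_suml -mulrBl; apply: MULY.
have GAa : GoodA a.
  case: ha => s [hs ->]; elim: s hs => [|p s IHs] hs; first by rewrite big_nil.
  rewrite big_cons; apply: GAD; last by apply: IHs => q hq; apply: hs; rewrite in_cons hq orbT.
  by have [_ hp] := hs p (mem_head _ _); apply: GAby.
case: (classic (prec G sim B C)) => // hnp; exfalso; apply: hna.
case: GAa => ws [hws zws].
apply: (DIR mulA_mod HZ (R1 := fun C' => C' = C) (R2 := prec G sim B) (s := [:: a]) (t := ws)).
- by move=> C' _ -> .
- move=> w [<-|[]]; right; exists C; split=> //.
- move=> w hw; case: (classic (Z w)) => hz; first by left.
  by have [C' [hC' hb hp]] := hws w hw; right; exists C'; split=> //; apply: hp.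
- by rewrite big_seq1 subrr; apply: LG0.
- exact: zws.
Qed.


Lemma Mem_In (T : eqType) (x : T) s : x \in s -> List.In x s.
Proof. elim: s => [|y s IH] //=; rewrite in_cons => /orP [/eqP ->|/IH h]; [by left | by right]. Qed.

Section Mod3.
Variables (V : lmodType k) (act : A -> V -> V).
Hypothesis Hact : is_Amodule act.
Notation zero := (@zero_set k V).

Lemma zero_sub : is_submodule act zero.
Proof.
rewrite /is_submodule /zero_set; split=> //.
- by move=> c u v -> ->; rewrite scaler0 addr0.
- by move=> a v ->; rewrite act0r.
Qed.

Lemma in_block0 B : in_block G act zero B 0.
Proof. by exists [::]; split=> // x _; rewrite /zero_set act0r. Qed.

Lemma KA B v a : cls B -> in_block G act zero B v ->
  exists us : seq V, (forall u, List.In u us -> exists C,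
     [/\ cls C, prec G sim B C, in_block G act zero C u & exists a', u = act a' v])
   /\ act a v = \sum_(u <- us) u.
Proof.
move=> hB [l [hl kl]].
have hblk := HCb hB hl; have [t [ht zt]] := hblk a I.
have kill0 : forall z, Zl l z -> act z v = 0.
  move=> z [s [hs ->]]; rewrite act_suml //.
  apply: (Zsum zero_sub) => p /In_mem /hs [_ h2].
  by rewrite actM // kl // act0r.
exists (map (fun w => act w v) t); split.
  move=> u /List.in_map_iff [w [<- hw]].
  have [_ [C [hC [lw [hlw kw]]]]] := ht w (In_mem hw).
  case: (classic (act w v = 0)) => h0.
    exists B; split=> //; first exact: rt_refl.
      by rewrite h0; apply: in_block0.
    by exists w.
  exists C; split=> //.
  - apply: (L_lemma hB hl hC (a := w)) => //.
      by exists lw.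
    by move=> hz; apply: h0; apply: kill0.
  - exists lw; split=> // x hx; rewrite /zero_set -actM //; apply: kill0.
    exact: kw hx.
  - by exists w.
rewrite big_map -act_suml //; apply/eqP; rewrite -subr_eq0 -actBl //; apply/eqP.
exact: kill0.
Qed.

Definition WfR (R : iset (iset A) -> Prop) (v : V) :=
  exists s : seq V, (forall w, List.In w s -> exists B, [/\ cls B, R B & in_block G act zero B w])
    /\ v = \sum_(w <- s) w.

Lemma WfR0 R : WfR R 0. Proof. by exists [::]; rewrite big_nil. Qed.
Lemma WfR_add R u v : WfR R u -> WfR R v -> WfR R (u + v).
Proof.
move=> [s1 [h1 ->]] [s2 [h2 ->]]; exists (s1 ++ s2); split; last by rewrite big_cat.
by move=> w hw; case: (List.in_app_or _ _ _ hw); [apply: h1 | apply: h2].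
Qed.
Lemma in_blockZ B c w : in_block G act zero B w -> in_block G act zero B (c *: w).
Proof. by move=> [l [hl kl]]; exists l; split=> // x /kl; rewrite /zero_set actZ // => ->; rewrite scaler0. Qed.
Lemma WfR_scale R c v : WfR R v -> WfR R (c *: v).
Proof.
move=> [s [h ->]]; exists (map (fun w => c *: w) s); split; last by rewrite big_map scaler_sumr.
move=> w' /List.in_map_iff [w [<- hw]].
by have [B [hB hR hb]] := h w hw; exists B; split=> //; apply: in_blockZ.
Qed.
Lemma WfR1 R B w : cls B -> R B -> in_block G act zero B w -> WfR R w.
Proof. by move=> hB hR hw; exists [:: w]; split; [move=> u [<-|[]]; exists B | rewrite big_seq1]. Qed.

Lemma WfR_good R v : WfR R v -> exists s, (forall w, List.In w s -> good act zero R w) /\ zero (v - \sum_(w <- s) w).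
Proof.
move=> [s [h ->]]; exists s; split; last by rewrite /zero_set subrr.
by move=> w /h [B [hB hR hb]]; right; exists B.
Qed.

End Mod3.


Section RC.
Variable R : relation (iset (iset A)).
Hypothesis Rs : forall x y, R x y -> R y x.
Hypothesis Rt : forall x y z, R x y -> R y z -> R x z.

Lemma RC_closed D B C : is_R_class G sim R D -> D B -> cls C -> R B C -> D C.
Proof.
move=> [B0 [hB0 hD]] /hD [hB hBB0] hC hBC; apply/hD; split=> //.
by apply: Rt hBB0; apply: Rs.
Qed.

Lemma RC_eq D D' B : is_R_class G sim R D -> is_R_class G sim R D' -> D B -> D' B -> D = D'.
Proof.
move=> hD hD' hDB hD'B.
apply: functional_extensionality => C; apply: propositional_extensionality.
have [B0 [hB0 eD]] := hD; have [B1 [hB1 eD']] := hD'.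
have [_ r0] := proj1 (eD B) hDB; have [_ r1] := proj1 (eD' B) hD'B.
rewrite eD eD'; split=> -[hC r]; split=> //.
- by apply: Rt r1; apply: Rt r (Rs r0).
- by apply: Rt r0; apply: Rt r (Rs r1).
Qed.
End RC.

Lemma Delta_sym x y : Delta G sim x y -> Delta G sim y x.
Proof. exact: rst_sym. Qed.
Lemma Delta_trans x y z : Delta G sim x y -> Delta G sim y z -> Delta G sim x z.
Proof. exact: rst_trans. Qed.
Lemma Nabla_sym x y : Nabla G sim x y -> Nabla G sim y x.
Proof. by case. Qed.
Lemma Nabla_trans x y z : Nabla G sim x y -> Nabla G sim y z -> Nabla G sim x z.
Proof. by case=> h1 h2 [h3 h4]; split; [apply: rt_trans h1 h3 | apply: rt_trans h4 h2]. Qed.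

Section Mod4.
Variables (V : lmodType k) (act : A -> V -> V).
Hypothesis Hact : is_Amodule act.
Notation zero := (@zero_set k V).

Lemma ia_sub D : is_R_class G sim (Delta G sim) D -> is_submodule act (WfR act D).
Proof.
move=> hD; split; first exact: WfR0.
  by move=> c u v hu hv; apply: WfR_add => //; apply: WfR_scale.
move=> a v [s [hs ->]]; rewrite act_sumr //.
elim: s hs => [|w s IH] hs; first by rewrite big_nil; apply: WfR0.
rewrite big_cons; apply: WfR_add; last by apply: IH => u hu; apply: hs; right.
have [B [hB hDB hb]] := hs w (or_introl erefl).
have [us [hus ->]] := KA Hact a hB hb.
exists us; split=> // u /hus [C [hC hp hbC _]]; exists C; split=> //.
by apply: (RC_closed Delta_sym Delta_trans hD hDB hC); apply: rst_step.
Qed.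

Lemma ia_HC D : is_R_class G sim (Delta G sim) D -> HC_sub_D G sim act D (WfR act D).
Proof.
move=> hD; split.
  move=> v [s [hs ->]]; exists s; split; last by rewrite /zero_set subrr.
  move=> w /Mem_In /[dup] hw /hs [B [hB hDB hb]]; split; last by exists B.
  exact: WfR1 hB hDB hb.
move=> B hB [v [hv hnz hb]]; case: (classic (D B)) => // hnD; exfalso; apply: hnz.
have [t [ht zt]] := WfR_good hv.
apply: (DIR Hact (zero_sub Hact) (R1 := fun C => C = B) (R2 := D) (s := [:: v]) (t := t)) => //.
- by move=> C _ -> .
- by move=> w [<-|[]]; right; exists B.
- by rewrite /zero_set big_seq1 subrr.
Qed.

End Mod4.


Section Mod5.
Variables (V : lmodType k) (act : A -> V -> V).
Hypothesis Hact : is_Amodule act.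
Notation zero := (@zero_set k V).

Lemma group (s : seq V) : (forall w, List.In w s -> exists B, cls B /\ in_block G act zero B w) ->
  exists ps : list (iset (iset (iset A)) * V),
    [/\ List.NoDup (List.map fst ps),
        (forall p, List.In p ps -> is_R_class G sim (Delta G sim) p.1 /\ WfR act p.1 p.2)
      & \sum_(w <- s) w = \sum_(p <- ps) p.2].
Proof.
elim: s => [|w s IH] hs.
  by exists nil; split; [constructor | by [] | rewrite !big_nil].
have [ps [nd hps e]] := IH (fun u hu => hs u (or_intror hu)).
have [B [hB hb]] := hs w (or_introl erefl).
pose D := fun C => cls C /\ Delta G sim C B.
have hD : is_R_class G sim (Delta G sim) D by exists B; split.
have hw : WfR act D w by apply: (WfR1 hB _ hb); split=> //; apply: rst_refl.
case: (classic (List.In D (List.map fst ps))) => hin.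
  have [p [ep hp]] := proj1 (List.in_map_iff _ _ _) hin.
  have [l1 [l2 el]] := List.in_split _ _ hp.
  exists (List.app l1 ((p.1, p.2 + w) :: l2)); split.
  - by move: nd; rewrite el !List.map_app /=.
  - move=> q hq; case: (List.in_app_or _ _ _ hq) => [h1|[<-|h2]].
    + by apply: hps; rewrite el; apply: List.in_or_app; left.
    + have [h1 h2] := hps p hp; split=> //=; apply: WfR_add => //.
      by rewrite ep.
    + by apply: hps; rewrite el; apply: List.in_or_app; right; right.
  - rewrite big_cons e el !big_cat !big_cons /=.
    by rewrite [LHS]addrCA (addrC p.2 w) -[in RHS](addrA w).
exists ((D, w) :: ps); split.
- by constructor.
- by move=> q [<-|hq]; [split | apply: hps].
- by rewrite !big_cons e.
Qed.

Lemma sum_nth (X : Type) (ps : list X) (F : X -> V) d :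
  \sum_(i < List.length ps) F (List.nth i ps d) = \sum_(p <- ps) F p.
Proof.
elim: ps => [|p ps IH]; first by rewrite big_ord0 big_nil.
by rewrite big_ord_recl big_cons /= -IH.
Qed.

Lemma ib (HV : HC G sim act) (v : V) :
  exists (n : nat) (Ds : 'I_n -> iset (iset (iset A))) (ws : 'I_n -> V),
    [/\ (forall i, is_R_class G sim (Delta G sim) (Ds i)),
        (forall i j, Ds i = Ds j -> i = j),
        (forall i, WfR act (Ds i) (ws i))
      & v = \sum_(i < n) ws i].
Proof.
have [s [hs zs]] := HV v I.
have [ps [nd hps e]] : exists ps : list (iset (iset (iset A)) * V),
    [/\ List.NoDup (List.map fst ps),
        (forall p, List.In p ps -> is_R_class G sim (Delta G sim) p.1 /\ WfR act p.1 p.2)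
      & \sum_(w <- s) w = \sum_(p <- ps) p.2].
  by apply: group => w /In_mem /hs [_ [B [hB hb]]]; exists B.
pose d := ((fun _ : iset (iset A) => False), (0 : V)).
exists (List.length ps), (fun i => (List.nth i ps d).1), (fun i => (List.nth i ps d).2).
have hin : forall i : 'I_(List.length ps), List.In (List.nth i ps d) ps.
  by move=> i; apply: List.nth_In; apply/ltP.
split.
- by move=> i; case: (hps _ (hin i)).
- move=> i j eij; apply: val_inj => /=.
  have := proj1 (List.NoDup_nth _ d.1) nd i j.
  rewrite !List.length_map !List.map_nth; apply; try apply/ltP; by [].
- by move=> i; case: (hps _ (hin i)).
- move: zs; rewrite /zero_set => /eqP; rewrite subr_eq0 => /eqP ->.
  by rewrite e -(sum_nth ps (fun p => p.2) d).
Qed.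

End Mod5.


Section Mod6.
Variables (V : lmodType k) (act : A -> V -> V).
Hypothesis Hact : is_Amodule act.
Notation zero := (@zero_set k V).

Lemma WfR_mono (R R' : iset (iset A) -> Prop) v : (forall C, R C -> R' C) -> WfR act R v -> WfR act R' v.
Proof.
move=> h [s [hs ->]]; exists s; split=> // w /hs [B [hB hR hb]]; exists B; split=> //; exact: h.
Qed.

Lemma ic n (Ds : 'I_n -> iset (iset (iset A))) (ws : 'I_n -> V) :
  (forall i, is_R_class G sim (Delta G sim) (Ds i)) -> (forall i j, Ds i = Ds j -> i = j) ->
  (forall i, WfR act (Ds i) (ws i)) -> \sum_(i < n) ws i = 0 -> forall i, ws i = 0.
Proof.
move=> hD hinj hW hsum i.
have e : ws i = - \sum_(j < n | j != i) ws j.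
  by move: hsum; rewrite (bigD1 i) //= => hsum; apply/eqP; rewrite -addr_eq0 hsum.
pose R2 := fun C => exists j, j != i /\ Ds j C.
have h2 : WfR act R2 (ws i).
  rewrite e -scaleN1r; apply: (WfR_scale Hact).
  apply: (big_ind (WfR act R2)); [exact: WfR0 | by move=> x y; apply: WfR_add |].
  move=> j hj; apply: WfR_mono (hW j) => C hC; exists j; split=> //.
have [s [hs zs]] := WfR_good (hW i); have [t [ht zt]] := WfR_good h2.
apply: (DIR Hact (zero_sub Hact) (R1 := Ds i) (R2 := R2) (s := s) (t := t)) => //.
move=> C hC h1 [j [hji hj]].
have := RC_eq Delta_sym Delta_trans (hD i) (hD j) h1 hj.
by move/hinj => eij; move: hji; rewrite eij eqxx.
Qed.

Lemma NZC (HB : is_block G sim act (@full_set V) zero) (v : V) : v <> 0 ->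
  exists w B, [/\ cls B, in_block G act zero B w & w <> 0].
Proof.
move=> hv; have [s [hs zs]] := HB v I.
case: (classic (exists w, List.In w s /\ w <> 0)) => [[w [hw hnz]]|hno].
  have [_ [B [hB hb]]] := hs w (In_mem hw); by exists w, B.
exfalso; apply: hv.
have : zero (\sum_(w <- s) w).
  apply: (Zsum (zero_sub Hact)) => w hw; apply: NNPP => hnz; apply: hno; by exists w.
move: zs; rewrite /zero_set => /eqP; rewrite subr_eq0 => /eqP -> //.
Qed.

Lemma GEN (hs : simple_in act (HC_sub G sim act)) C u C' u' :
  cls C -> in_block G act zero C u -> u <> 0 ->
  cls C' -> in_block G act zero C' u' -> u' <> 0 -> prec G sim C C'.
Proof.
move=> hC hu hnz hC' hu' hnz'.
have [_ _ hW] := hs.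
pose Wu := fun z => exists a, z = act a u.
have sub : is_submodule act Wu.
  split.
  - by exists 0; rewrite act0l.
  - move=> c x y [a ->] [b ->]; exists (c *: a + b).
    by have [_ h _ _] := (Hact : [/\ _, _, _ & _]); rewrite h.
  - by move=> a x [b ->]; exists (a * b); rewrite actM.
have hb : HC_sub G sim act Wu.
  move=> z [a ->]; have [us [hus e]] := KA Hact a hC hu.
  exists us; split; last by rewrite /zero_set e subrr.
  move=> w /Mem_In /hus [C0 [hC0 _ hb0 [a2 ea2]]]; split; first by exists a2.
  by exists C0; split.
case: (hW Wu sub hb) => [h0|hall].
  by exfalso; apply: hnz; apply: h0; exists 1; rewrite act1.
have [a ea] := hall u'.
have [us [hus e]] := KA Hact a hC hu.
case: (classic (prec G sim C C')) => // hnp; exfalso; apply: hnz'.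
apply: (DIR Hact (zero_sub Hact) (R1 := fun D => D = C') (R2 := prec G sim C) (s := [:: u']) (t := us)).
- by move=> D _ ->.
- by move=> w [<-|[]]; right; exists C'.
- by move=> w /hus [D [hD hp hbD _]]; right; exists D.
- by rewrite /zero_set big_seq1 subrr.
- by rewrite /zero_set ea e subrr.
Qed.

Lemma iia : simple_in act (HC_sub G sim act) ->
  exists D, is_R_class G sim (Nabla G sim) D /\ simple_in act (HC_sub_D G sim act D).
Proof.
move=> hs; have [hfull [v hv] hW] := hs.
have [w0 [B0 [hB0 hb0 hnz0]]] := NZC hfull hv.
exists (fun C => cls C /\ Nabla G sim C B0); split; first by exists B0; split.
split.
- split=> // C hC [u [_ hnz hb]]; split=> //; split.
    exact (GEN hs hC hb hnz hB0 hb0 hnz0).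
  exact (GEN hs hB0 hb0 hnz0 hC hb hnz).
- by exists v.
- by move=> W hsub [hbW _]; apply: hW.
Qed.

Lemma iib D : simple_in act (HC_sub_D G sim act D) -> simple_in act (HC_sub G sim act).
Proof.
move=> [[hfb hfs] [v hv] hW]; split=> //; first by exists v.
move=> W hsub hb; apply: hW => //; split=> // B hB [x [hx hnz hbx]].
by apply: hfs => //; exists x.
Qed.

Lemma iic D D' : is_R_class G sim (Nabla G sim) D -> is_R_class G sim (Nabla G sim) D' ->
  simple_in act (HC_sub_D G sim act D) -> simple_in act (HC_sub_D G sim act D') -> D = D'.
Proof.
move=> hD hD' [[hfb hfs] [v hv] _] [[_ hfs'] _ _].
have [w [B [hB hb hnz]]] := NZC hfb hv.
have hsB : in_supp G act (@full_set V) zero B by exists w.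
exact (RC_eq Nabla_sym Nabla_trans hD hD' (hfs B hB hsB) (hfs' B hB hsB)).
Qed.

End Mod6.


Lemma ihom D D' : is_R_class G sim (Delta G sim) D -> is_R_class G sim (Delta G sim) D' -> D <> D' ->
  forall (V V' : lmodType k) (act : A -> V -> V) (act' : A -> V' -> V'),
    is_Amodule act -> is_Amodule act' ->
    HC_D G sim act D -> HC_D G sim act' D' ->
    forall f : V -> V', is_Ahom act act' f -> forall v, f v = 0.
Proof.
move=> hD hD' hne V V' act act' Hact Hact' [hb hs] [hb' hs'] f [fl fa] v.
have f0 : f 0 = 0.
  have := fl 1 0 0; rewrite (scale1r (0 : V)) (scale1r (f 0)) addr0 => h.
  by apply: (addrI (f 0)); rewrite addr0 -h.
have fD : forall u w, f (u + w) = f u + f w by move=> u w; rewrite -{1}(scale1r u) fl scale1r.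
have [s [hss zs]] := hb v I.
move: zs; rewrite /zero_set => /eqP; rewrite subr_eq0 => /eqP ->.
have -> : f (\sum_(w <- s) w) = \sum_(w <- s) f w.
  by elim: s {hss} => [|w s IH]; rewrite ?big_nil ?f0 // !big_cons fD IH.
apply: big1_seq => w /andP [_ hw].
have [_ [B [hB hbw]]] := hss w hw.
case: (classic (f w = 0)) => // hfw; exfalso.
have hwnz : w <> 0 by move=> e; apply: hfw; rewrite e f0.
have hDB : D B by apply: hs => //; exists w; split.
have hD'B : D' B.
  apply: hs' => //; exists (f w); split=> //.
  case: hbw => l [hl kl]; exists l; split=> // x hx.
  by rewrite /zero_set -fa kl.
exact: hne (RC_eq Delta_sym Delta_trans hD hD' hDB hD'B).
Qed.

Lemma main_sec :
  (forall (V : lmodType k) (act : A -> V -> V),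
     is_Amodule act -> HC G sim act ->
     exists Wf : iset (iset (iset A)) -> iset V,
       [/\ (forall D, is_R_class G sim (Delta G sim) D ->
              is_submodule act (Wf D) /\ HC_sub_D G sim act D (Wf D)),
           (forall v : V, exists (n : nat) (Ds : 'I_n -> iset (iset (iset A)))
                (ws : 'I_n -> V),
              [/\ (forall i, is_R_class G sim (Delta G sim) (Ds i)),
                  (forall i j, Ds i = Ds j -> i = j),
                  (forall i, Wf (Ds i) (ws i))
                & v = \sum_(i < n) ws i])
         & (forall (n : nat) (Ds : 'I_n -> iset (iset (iset A))) (ws : 'I_n -> V),
              (forall i, is_R_class G sim (Delta G sim) (Ds i)) ->
              (forall i j, Ds i = Ds j -> i = j) ->
              (forall i, Wf (Ds i) (ws i)) ->
              \sum_(i < n) ws i = 0 -> forall i, ws i = 0)]) /\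
  (forall D D' : iset (iset (iset A)),
     is_R_class G sim (Delta G sim) D -> is_R_class G sim (Delta G sim) D' -> D <> D' ->
     forall (V V' : lmodType k) (act : A -> V -> V) (act' : A -> V' -> V'),
       is_Amodule act -> is_Amodule act' ->
       HC_D G sim act D -> HC_D G sim act' D' ->
       forall f : V -> V', is_Ahom act act' f -> forall v, f v = 0) /\
  [/\ (forall (V : lmodType k) (act : A -> V -> V), is_Amodule act ->
         simple_in act (HC_sub G sim act) ->
         exists D, is_R_class G sim (Nabla G sim) D /\
                   simple_in act (HC_sub_D G sim act D)),
      (forall (D : iset (iset (iset A))) (V : lmodType k) (act : A -> V -> V),
         is_R_class G sim (Nabla G sim) D -> is_Amodule act ->
         simple_in act (HC_sub_D G sim act D) -> simple_in act (HC_sub G sim act))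
    & (forall (D D' : iset (iset (iset A))) (V : lmodType k) (act : A -> V -> V),
         is_R_class G sim (Nabla G sim) D -> is_R_class G sim (Nabla G sim) D' ->
         is_Amodule act ->
         simple_in act (HC_sub_D G sim act D) -> simple_in act (HC_sub_D G sim act D') ->
         D = D')].
Proof.
split.
  move=> V act Hact HV; exists (fun D => WfR act D); split.
  - by move=> D hD; split; [exact (ia_sub Hact hD) | exact (ia_HC Hact hD)].
  - exact (ib HV).
  - exact (ic Hact).
split; first exact: ihom.
split.
- by move=> V act Hact; exact (iia Hact).
- by move=> D V act _ Hact; exact (iib (V := V) (act := act) (D := D)).
- by move=> D D' V act hD hD' Hact; exact (iic Hact hD hD').
Qed.

End Main.

Theorem mainTheorem1 (k : fieldType) (A : algType k) (G : {pred A})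
  (HG : GRing.subalg_closed G)
  (sim : iset A -> iset A -> Prop) (Hsim : equiv_on_cfs G sim)
  (HCb : HC_block_subalgebra G sim) :
  (* (i), first part: decomposition over Delta-classes *)
  (forall (V : lmodType k) (act : A -> V -> V),
     is_Amodule act -> HC G sim act ->
     exists Wf : iset (iset (iset A)) -> iset V,
       [/\ (forall D, is_R_class G sim (Delta G sim) D ->
              is_submodule act (Wf D) /\ HC_sub_D G sim act D (Wf D)),
           (forall v : V, exists (n : nat) (Ds : 'I_n -> iset (iset (iset A)))
                (ws : 'I_n -> V),
              [/\ (forall i, is_R_class G sim (Delta G sim) (Ds i)),
                  (forall i j, Ds i = Ds j -> i = j),
                  (forall i, Wf (Ds i) (ws i))
                & v = \sum_(i < n) ws i])
         & (forall (n : nat) (Ds : 'I_n -> iset (iset (iset A))) (ws : 'I_n -> V),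
              (forall i, is_R_class G sim (Delta G sim) (Ds i)) ->
              (forall i j, Ds i = Ds j -> i = j) ->
              (forall i, Wf (Ds i) (ws i)) ->
              \sum_(i < n) ws i = 0 -> forall i, ws i = 0)]) /\
  (* (i), second part: no nonzero maps between different Delta-blocks *)
  (forall D D' : iset (iset (iset A)),
     is_R_class G sim (Delta G sim) D -> is_R_class G sim (Delta G sim) D' -> D <> D' ->
     forall (V V' : lmodType k) (act : A -> V -> V) (act' : A -> V' -> V'),
       is_Amodule act -> is_Amodule act' ->
       HC_D G sim act D -> HC_D G sim act' D' ->
       forall f : V -> V', is_Ahom act act' f -> forall v, f v = 0) /\
  (* (ii): Irr(A;Gamma,~) is the disjoint union of the Irr(A;Gamma,~;D),
     D ranging over Nabla-classes *)
  [/\ (forall (V : lmodType k) (act : A -> V -> V), is_Amodule act ->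
         simple_in act (HC_sub G sim act) ->
         exists D, is_R_class G sim (Nabla G sim) D /\
                   simple_in act (HC_sub_D G sim act D)),
      (forall (D : iset (iset (iset A))) (V : lmodType k) (act : A -> V -> V),
         is_R_class G sim (Nabla G sim) D -> is_Amodule act ->
         simple_in act (HC_sub_D G sim act D) -> simple_in act (HC_sub G sim act))
    & (forall (D D' : iset (iset (iset A))) (V : lmodType k) (act : A -> V -> V),
         is_R_class G sim (Nabla G sim) D -> is_R_class G sim (Nabla G sim) D' ->
         is_Amodule act ->
         simple_in act (HC_sub_D G sim act D) -> simple_in act (HC_sub_D G sim act D') ->
         D = D')].
Proof. exact: (main_sec HG Hsim HCb). Qed.
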